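(* Let $q\ge 4$ be a power of $2$. Then there exists a linear AOA$(1,3,q+2,q)$.
   Context: An orthogonal array OA$(t,k,v)$ (with $1\le t\le k$) is a $v^t\times k$ array with entries from a set $X$ of size $v$ such that, for every choice of $t$ of its columns, each $t$-tuple in $X^t$ appears exactly once as a row of the corresponding $v^t\times t$ subarray. For integers $1\le s\le t\le k$, an augmented orthogonal array AOA$(s,t,k,v)$ is a $v^t\times(k+1)$ array $A$ such that: (1) the first $k$ columns of $A$ form an OA$(t,k,v)$ on a symbol set $X$ of size $v$; (2) the last column of $A$ has entries from a set $Y$ of size $v^{t-s}$; (3) for any choice of $s$ of the first $k$ columns, these $s$ columns together with the last column contain every $(s+1)$-tuple of $X^s\times Y$ exactly once as a row. For a prime power $q$, an AOA$(s,t,k,q)$ is linear if $X=\mathbb{F}_q$, $Y=\mathbb{F}_q^{t-s}$, and its set of rows, regarded as vectors in $\mathbb{F}_q^{k}\times\mathbb{F}_q^{t-s}=\mathbb{F}_q^{k+t-s}$, is an $\mathbb{F}_q$-linear subspace. *)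

(* Defs.v *)
From HB Require Import structures.
From mathcomp Require Import all_boot all_algebra.
Set Implicit Arguments. Unset Strict Implicit. Unset Printing Implicit Defensive.
Import GRing.Theory.
Local Open Scope ring_scope.

Definition is_OA (X : finType) (t k v : nat) (A : seq {ffun 'I_k -> X}) : Prop :=
  [/\ (1 <= t <= k)%N, #|X| = v, size A = (v ^ t)%N &
      forall c : 'I_t -> 'I_k, injective c ->
        forall x : {ffun 'I_t -> X},
          count (fun r : {ffun 'I_k -> X} => [forall i, r (c i) == x i]) A = 1%N].

(* AOA(s,t,k,v): a v^t x (k+1) array, row = (first k entries, last entry). *)
Definition is_AOA (X Y : finType) (s t k v : nat)
    (A : seq ({ffun 'I_k -> X} * Y)) : Prop :=
  [/\ (1 <= s <= t)%N, (t <= k)%N,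
      is_OA t v (map fst A),
      #|Y| = (v ^ (t - s))%N &
      forall c : 'I_s -> 'I_k, injective c ->
        forall (x : {ffun 'I_s -> X}) (y : Y),
          count (fun r : {ffun 'I_k -> X} * Y =>
                   [forall i, r.1 (c i) == x i] && (r.2 == y)) A = 1%N].

Definition is_linear_AOA (F : finFieldType) (s t k : nat)
    (A : seq ({ffun 'I_k -> F} * 'rV[F]_(t - s))) : Prop :=
  [/\ is_AOA s t #|F| A,
      ((0 : {ffun 'I_k -> F}), (0 : 'rV[F]_(t - s))) \in A,
      (forall r1 r2 : {ffun 'I_k -> F} * 'rV[F]_(t - s), r1 \in A -> r2 \in A -> (r1.1 + r2.1, r1.2 + r2.2) \in A) &
      (forall (a : F) (r : {ffun 'I_k -> F} * 'rV[F]_(t - s)), r \in A -> ([ffun j => a * r.1 j], a *: r.2) \in A)].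
Arguments is_linear_AOA {F} s t k A.

(* Main.v *)
Require Import Defs.
From mathcomp Require Import all_boot all_algebra all_field.
From mathcomp Require Import ring zify.
Set Implicit Arguments. Unset Strict Implicit. Unset Printing Implicit Defensive.
Import GRing.Theory.
Local Open Scope ring_scope.

Lemma count_inj (T V : finType) (f : T -> V) (x : V) :
  #|T| = #|V| -> injective f -> count (fun u => f u == x) (enum T) = 1%N.
Proof.
move=> hc finj.
have h : #|f @: [set: T]| == #|[set: T]|.
  by apply/imset_injP => a b _ _; apply: finj.
have e : f @: [set: T] = [set: V].
  by apply/eqP; rewrite eqEcard subsetT (eqP h) !cardsT hc /= leqnn.
have : x \in f @: [set: T] by rewrite e in_setT.
case/imsetP => u0 _ ->.
transitivity (count (pred1 u0) (enum T)).
  by apply: eq_count => u /=; rewrite (inj_eq finj).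
by rewrite count_uniq_mem ?enum_uniq ?mem_enum.
Qed.

Lemma char2 (F : finFieldType) (m : nat) : #|F| = (2 ^ m)%N -> 2%:R = 0 :> F.
Proof. move=> h; exact: pcharf0 (card_finPcharP h (isT : prime 2)). Qed.

Lemma exists_c (F : finFieldType) : 2%:R = 0 :> F ->
  exists c : F, forall a : F, a ^+ 2 + a + c != 0.
Proof.
move=> h2.
case: (boolP [exists c : F, [forall a : F, a ^+ 2 + a + c != 0]]).
  by case/existsP => c /forallP; exists c.
rewrite negb_exists => /forallP hall.
have surj : forall b : F, exists a, a ^+ 2 + a = b.
  move=> b; move: (hall (- b)); rewrite negb_forall => /existsP [a].
  rewrite negbK addr_eq0 opprK => /eqP <-; by exists a.
pose s := fun a : F => a ^+ 2 + a.
have : #|s @: [set: F]| == #|[set: F]|.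
  have -> : s @: [set: F] = [set: F].
    apply/setP => b; rewrite inE; have [a ha] := surj b.
    by apply/imsetP; exists a; rewrite ?inE.
  by [].
move/imset_injP => sinj.
have : s 0 = s 1 by rewrite /s expr0n /= expr1n addr0 -[1 + 1]/(2%:R) h2.
move/sinj => /(_ (in_setT _) (in_setT _)) /eqP; by rewrite eq_sym oner_eq0.
Qed.
Section S.
Variable F : fieldType.

Lemma alg3 (a b c w0 w1 w2 : F) : a != b -> a != c -> b != c ->
  w0 + a * w1 + a ^+ 2 * w2 = 0 -> w0 + b * w1 + b ^+ 2 * w2 = 0 ->
  w0 + c * w1 + c ^+ 2 * w2 = 0 -> [/\ w0 = 0, w1 = 0 & w2 = 0].
Proof.
move=> ab ac bc h1 h2 h3.
have e12 : (a - b) * (w1 + (a + b) * w2) = 0.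
  by rewrite -[LHS]addr0 -{1}h2 -[X in _ + X = _]subr0 -{1}h1; ring.
have e13 : (a - c) * (w1 + (a + c) * w2) = 0.
  by rewrite -[LHS]addr0 -{1}h3 -[X in _ + X = _]subr0 -{1}h1; ring.
move/eqP: e12; rewrite mulf_eq0 subr_eq0 (negPf ab) /= => /eqP f1.
move/eqP: e13; rewrite mulf_eq0 subr_eq0 (negPf ac) /= => /eqP f2.
have : (b - c) * w2 = 0 by rewrite -[LHS]addr0 -{1}f2 -[X in _ + X = _]subr0 -{1}f1; ring.
move/eqP; rewrite mulf_eq0 subr_eq0 (negPf bc) /= => /eqP hw2.
move: f1; rewrite hw2 mulr0 addr0 => hw1.
by move: h1; rewrite hw1 hw2 !mulr0 !addr0.
Qed.

Lemma alg2 (a b w0 w1 : F) : a != b ->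
  w0 + a * w1 = 0 -> w0 + b * w1 = 0 -> w0 = 0 /\ w1 = 0.
Proof.
move=> ab h1 h2.
have : (a - b) * w1 = 0 by rewrite -[LHS]addr0 -{1}h2 -[X in _ + X = _]subr0 -{1}h1; ring.
move/eqP; rewrite mulf_eq0 subr_eq0 (negPf ab) /= => /eqP hw1.
by move: h1; rewrite hw1 mulr0 addr0.
Qed.

Lemma sq_inj2 (a b : F) : 2%:R = 0 :> F -> a != b -> a ^+ 2 != b ^+ 2.
Proof.
move=> h2 ab; rewrite -subr_eq0.
have -> : a ^+ 2 - b ^+ 2 = (a - b) ^+ 2 + 2%:R * (a * b - b * b) by ring.
by rewrite h2 mul0r addr0 expf_eq0 /= subr_eq0.
Qed.
End S.

Section M.
Variable F : finFieldType.
Notation q := #|F|.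
Definition av (j : nat) : F := nth 0 (enum F) j.
Definition pt (j : nat) : F * F * F :=
  if (j < q)%N then (1, av j, av j ^+ 2) else if j == q then (0, 1, 0) else (0, 0, 1).
Definition dot (p u : F * F * F) : F := p.1.1 * u.1.1 + p.1.2 * u.1.2 + p.2 * u.2.

Lemma av_inj j j' : (j < q)%N -> (j' < q)%N -> j != j' -> av j != av j'.
Proof. by move=> h h' ne; rewrite /av nth_uniq ?enum_uniq // -cardT. Qed.

Lemma pt_aff j : (j < q)%N -> pt j = (1, av j, av j ^+ 2).
Proof. by rewrite /pt => ->. Qed.
Lemma pt_q : pt q = (0, 1, 0).
Proof. by rewrite /pt ltnn eqxx. Qed.
Lemma pt_q1 : pt q.+1 = (0, 0, 1).
Proof. by rewrite /pt ltnNge leqnSn /= gtn_eqF. Qed.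

Lemma ker_sorted (h2 : 2%:R = 0 :> F) j1 j2 j3 (w : F * F * F) :
  (j1 < j2)%N -> (j2 < j3)%N -> (j3 < q + 2)%N ->
  dot (pt j1) w = 0 -> dot (pt j2) w = 0 -> dot (pt j3) w = 0 -> w = (0, 0, 0).
Proof.
case: w => [[w0 w1] w2] l12 l23 l3.
case: (ltnP j3 q) => h3.
  rewrite !pt_aff; try lia.
  rewrite /dot /= !mul1r => e1 e2 e3.
  have d12 : av j1 != av j2 by apply: av_inj; lia.
  have d13 : av j1 != av j3 by apply: av_inj; lia.
  have d23 : av j2 != av j3 by apply: av_inj; lia.
  by have [-> -> ->] := alg3 d12 d13 d23 e1 e2 e3.
have [e3|e3] : j3 = q \/ j3 = q.+1 by lia.
  rewrite e3 pt_q !pt_aff; try lia.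
  rewrite /dot /= !mul1r !mul0r add0r addr0 => e1 e2 hw1.
  move: e1 e2; rewrite hw1 !mulr0 !addr0 => e1 e2.
  have d12 : av j1 != av j2 by apply: av_inj; lia.
  by have [-> ->] := alg2 (sq_inj2 h2 d12) e1 e2.
rewrite e3 pt_q1.
case: (ltnP j2 q) => h2'.
  rewrite !pt_aff; try lia.
  rewrite /dot /= !mul1r !mul0r !add0r => e1 e2 hw2.
  move: e1 e2; rewrite hw2 !mulr0 !addr0 => e1 e2.
  have d12 : av j1 != av j2 by apply: av_inj; lia.
  by have [-> ->] := alg2 d12 e1 e2.
have e2 : j2 = q by lia.
rewrite e2 pt_q pt_aff; try lia.
rewrite /dot /= !mul1r !mul0r !add0r => e1 hw1 hw2.
by move: e1; rewrite addr0 in hw1; rewrite hw1 hw2 !mulr0 !addr0 => ->.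
Qed.

Lemma ker_any (h2 : 2%:R = 0 :> F) j1 j2 j3 (w : F * F * F) :
  j1 != j2 -> j1 != j3 -> j2 != j3 ->
  (j1 < q + 2)%N -> (j2 < q + 2)%N -> (j3 < q + 2)%N ->
  dot (pt j1) w = 0 -> dot (pt j2) w = 0 -> dot (pt j3) w = 0 -> w = (0, 0, 0).
Proof.
move=> n12 n13 n23 l1 l2 l3 e1 e2 e3.
case: (ltngtP j1 j2) => c12; case: (ltngtP j1 j3) => c13; case: (ltngtP j2 j3) => c23; try (exfalso; lia);
first [ (apply: (ker_sorted h2 _ _ _ e1 e2 e3); lia)
      | (apply: (ker_sorted h2 _ _ _ e1 e3 e2); lia)
      | (apply: (ker_sorted h2 _ _ _ e2 e1 e3); lia)
      | (apply: (ker_sorted h2 _ _ _ e2 e3 e1); lia)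
      | (apply: (ker_sorted h2 _ _ _ e3 e1 e2); lia)
      | (apply: (ker_sorted h2 _ _ _ e3 e2 e1); lia) ].
Qed.

Definition Yv (cst : F) (u : F * F * F) : 'rV[F]_2 :=
  \row_(i < 2) (if i == ord0 then u.1.2 - u.2 else u.1.1 - cst * u.2).

Lemma ker_Y (cst : F) (hc : forall a : F, a ^+ 2 + a + cst != 0) j (w : F * F * F) :
  (j < q + 2)%N -> Yv cst w = 0 -> dot (pt j) w = 0 -> w = (0, 0, 0).
Proof.
case: w => [[w0 w1] w2] lj hY hd.
have y0 := congr1 (fun M : 'rV[F]_2 => M 0 0) hY.
have y1 := congr1 (fun M : 'rV[F]_2 => M 0 1) hY.
move: y0 y1; rewrite !mxE /= => /eqP; rewrite subr_eq0 => /eqP e1 /eqP; rewrite subr_eq0 => /eqP e0.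
rewrite e1 e0.
suff -> : w2 = 0 by rewrite mulr0.
move: hd.
case: (ltnP j q) => h.
  rewrite pt_aff // /dot /= e1 e0 => /eqP.
  have -> : 1 * (cst * w2) + av j * w2 + av j ^+ 2 * w2 = (av j ^+ 2 + av j + cst) * w2 by ring.
  by rewrite mulf_eq0 (negPf (hc _)) /= => /eqP.
have [e|e] : j = q \/ j = q.+1 by lia.
  by rewrite e pt_q /dot /= e1 !mul0r mul1r add0r addr0.
by rewrite e pt_q1 /dot /= !mul0r mul1r !add0r.
Qed.
End M.

Section Main.
Variable F : finFieldType.
Notation q := #|F|.

Definition enc k (u : F * F * F) : {ffun 'I_k -> F} := [ffun j : 'I_k => dot (pt F j) u].
Definition sub3 (u v : F * F * F) : F * F * F := (u.1.1 - v.1.1, u.1.2 - v.1.2, u.2 - v.2).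

Lemma dot_sub p u v : dot p (sub3 u v) = dot p u - dot p v.
Proof. by case: p => [[p0 p1] p2]; case: u => [[u0 u1] u2]; case: v => [[v0 v1] v2]; rewrite /dot /=; ring. Qed.

Lemma Yv_sub cst u v : Yv cst (sub3 u v) = Yv cst u - Yv cst v.
Proof.
apply/matrixP => i j; rewrite !mxE; case: ifP => _;
by case: u => [[u0 u1] u2]; case: v => [[v0 v1] v2]; rewrite /=; ring.
Qed.

Lemma sub3_eq u v : sub3 u v = (0, 0, 0) -> u = v.
Proof.
case: u => [[u0 u1] u2]; case: v => [[v0 v1] v2]; rewrite /sub3 /=.
by case=> /eqP; rewrite subr_eq0 => /eqP -> /eqP; rewrite subr_eq0 => /eqP -> /eqP; rewrite subr_eq0 => /eqP ->.
Qed.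

Definition rows cst : seq ({ffun 'I_(q + 2) -> F} * 'rV[F]_(3 - 1)) :=
  [seq (enc (q + 2) u, Yv cst u) | u <- enum {: F * F * F}].

End Main.

Theorem theorem3p9 (F : finFieldType) (m : nat) :
  #|F| = (2 ^ m)%N -> (4 <= #|F|)%N ->
  exists A : seq ({ffun 'I_(#|F| + 2) -> F} * 'rV[F]_(3 - 1)),
    is_linear_AOA 1 3 (#|F| + 2) A.
Proof.
move=> hq h4; have h2 := char2 hq; have [cst hc] := exists_c h2.
have cardT3 : #|{: F * F * F}| = (#|F| ^ 3)%N.
  by rewrite !card_prod !expnS expn0 muln1 mulnA.
exists (rows cst); split.
- split; [done | lia | split; [lia | done | | ] | | ].
  + by rewrite /rows !size_map -enumT -cardT cardT3.
  + move=> c cinj x; rewrite /rows count_map count_map.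
    pose fO u : {ffun 'I_3 -> F} := [ffun i => enc (#|F| + 2) u (c i)].
    rewrite (eq_count (a2 := fun u => fO u == x)); last first.
      move=> u /=; apply/forallP/eqP => [H|<- i]; last by rewrite !ffunE.
      by apply/ffunP => i; rewrite ffunE; apply/eqP.
    apply: count_inj; first by rewrite cardT3 card_ffun card_ord.
    move=> u v /ffunP H; apply: sub3_eq.
    have K : forall i, dot (pt F (c i)) (sub3 u v) = 0.
      by move=> i; move: (H i); rewrite !ffunE dot_sub => ->; rewrite subrr.
    have d : forall i i' : 'I_3, i != i' -> (c i : nat) != c i'.
      by move=> i i' ne; rewrite val_eqE (inj_eq cinj).
    by apply: (ker_any h2 (d 0 1 isT) (d 0 2 isT) (d 1 2 isT) (ltn_ord _) (ltn_ord _) (ltn_ord _) (K 0) (K 1) (K 2)).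
  + by rewrite card_mx mul1n.
  move=> c cinj x y; rewrite /rows count_map.
  pose fA u : {ffun 'I_1 -> F} * 'rV[F]_(3 - 1) := ([ffun i => enc (#|F| + 2) u (c i)], Yv cst u).
  rewrite (eq_count (a2 := fun u => fA u == (x, y))); last first.
    move=> u /=; rewrite xpair_eqE; congr (_ && _).
    apply/forallP/eqP => [H|<- i]; last by rewrite !ffunE.
    by apply/ffunP => i; rewrite ffunE; apply/eqP.
  apply: count_inj; first by rewrite cardT3 card_prod card_ffun card_ord card_mx.
  move=> u v [/ffunP H HY]; apply: sub3_eq.
  apply: (ker_Y hc (ltn_ord (c 0))).
    by rewrite Yv_sub HY subrr.
  by move: (H 0); rewrite !ffunE dot_sub => ->; rewrite subrr.
- apply/mapP; exists (0, 0, 0); first by rewrite mem_enum.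
  congr pair.
    by apply/ffunP => j; rewrite !ffunE /dot !mulr0 !addr0.
  by apply/matrixP => i j; rewrite !mxE; case: ifP => _ /=; rewrite ?mulr0 subr0.
- move=> r1 r2 /mapP [u _ ->] /mapP [v _ ->].
  apply/mapP; exists (u.1.1 + v.1.1, u.1.2 + v.1.2, u.2 + v.2); first by rewrite mem_enum.
  congr pair.
    apply/ffunP => j; rewrite !ffunE /dot /=; ring.
  apply/matrixP => i j; rewrite !mxE; case: ifP => _ /=; ring.
- move=> a r /mapP [u _ ->].
  apply/mapP; exists (a * u.1.1, a * u.1.2, a * u.2); first by rewrite mem_enum.
  congr pair.
    apply/ffunP => j; rewrite !ffunE /dot /=; ring.
  apply/matrixP => i j; rewrite !mxE; case: ifP => _ /=; ring.
Qed.
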